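(* Let $m\ge1$ and let $\alpha\subseteq\langle 2m\rangle$ be a $2m$-element subset of weight zero, i.e. $\alpha=\{\bar\alpha_m,\dots,\bar\alpha_1,\alpha_1,\dots,\alpha_m\}$ with positive part $\alpha_+=\{\alpha_1<\dots<\alpha_m\}\subseteq[2m]$. If $\alpha$ is Northeast, then $\alpha_+\ge(2,4,\dots,2m)$ in $\binom{[2m]}{m}$, i.e. $\alpha_i\ge 2i$ for $i=1,\dots,m$. In particular $1\notin\alpha_+$ and $2m\in\alpha_+$.
   Context: $\langle 2m\rangle=\{\overline{2m}<\dots<\bar1<1<\dots<2m\}$ with $\bar\imath=-i$; $\binom{[2m]}{m}$ is ordered componentwise on increasing sequences. A $2m$-element subset of $\langle 2m\rangle$ corresponds to a partition in the $2m\times 2m$ square via the lattice path from the lower-left to the upper-right corner whose $j$-th step is upward if the $j$-th smallest element of $\langle 2m\rangle$ lies in the subset and rightward otherwise (the partition being the boxes between the path and the top and left edges). Such a partition $\lambda$ (boxes indexed (row from top, column from left)) is Northeast if for every box $(r,c)\in\lambda$ with $r>c$, the box $(c,r)$ also lies in $\lambda$. *)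

(* Defs.v *)
From mathcomp Require Import all_boot all_order all_algebra.
Set Implicit Arguments. Unset Strict Implicit. Unset Printing Implicit Defensive.
Import GRing.Theory Num.Theory.

(* The totally ordered set <2m> = {-2m < ... < -1 < 1 < ... < 2m}, with
   \bar i encoded as the integer -i.  [angle_elem m j] is the (j+1)-th
   smallest element (j is 0-indexed, j < 4m). *)
Definition angle_elem (m j : nat) : int :=
  if j < 2 * m then (- (Posz (2 * m - j)))%R else Posz (j - 2 * m).+1.

Definition angle (m : nat) : seq int := [seq angle_elem m j | j <- iota 0 (4 * m)].

Definition subset_angle (m : nat) (alpha : pred int) : Prop :=
  forall x : int, alpha x -> x \in angle m.

Definition card_angle (m : nat) (alpha : pred int) : nat :=
  size [seq x <- angle m | alpha x].

Definition weight_zero (m : nat) (alpha : pred int) : Prop :=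
  forall i : nat, 1 <= i <= 2 * m -> alpha (Posz i) = alpha (- Posz i)%R.

Definition pos_part (m : nat) (alpha : pred int) : seq nat :=
  [seq i <- iota 1 (2 * m) | alpha (Posz i)].

(* Lattice path: the j-th step is up (true) iff the j-th smallest element
   of <2m> lies in alpha, right (false) otherwise. *)
Definition steps (m : nat) (alpha : pred int) : seq bool :=
  [seq alpha x | x <- angle m].

(* height (number of up steps) of the path just before its c-th right step
   (c is 1-indexed) *)
Definition col_height (m : nat) (alpha : pred int) (c : nat) : nat :=
  let s := steps m alpha in
  let rights := [seq j <- iota 0 (size s) | ~~ nth false s j] in
  let k := nth 0 rights c.-1 in
  count id (take k s).

(* box (r, c) (row from top, column from left, 1-indexed) of the 2m x 2m
   square lies in the partition: it is between the path and the top/left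
   edges, i.e. its bottom edge (at height 2m - r) is at or above the path
   in column c. *)
Definition in_partition (m : nat) (alpha : pred int) (r c : nat) : bool :=
  [&& 1 <= r <= 2 * m, 1 <= c <= 2 * m & col_height m alpha c <= 2 * m - r].

Definition northeast (m : nat) (alpha : pred int) : Prop :=
  forall r c : nat, in_partition m alpha r c -> c < r -> in_partition m alpha c r.

(* Main.v *)
Require Import Defs.
From mathcomp Require Import all_boot all_order all_algebra.
From mathcomp Require Import zify.

Lemma nth_filter_iota (p : pred nat) N a i : i < count p (iota a N) ->
  let k := nth 0 (filter p (iota a N)) i in
  a <= k < a + N /\ p k /\ count p (iota a (k - a)) = i.
Proof.
elim: N a i => [|N IH] a i //=.
case pa: (p a) => /=.
- case: i => [|i] /=; first by rewrite subnn pa; split => //; lia.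
  rewrite add1n ltnS => /IH [/andP[h1 h1'] [h2 h3]]; split; first lia.
  split => //.
  move: h1 h1' h3; set k := nth 0 _ i => h1 h1' h3.
  have -> : k - a = (k - a.+1).+1 by lia.
  by rewrite /= pa h3.
- rewrite add0n => /IH [/andP[h1 h1'] [h2 h3]]; split; first lia.
  split => //.
  move: h1 h1' h3; set k := nth 0 _ i => h1 h1' h3.
  have -> : k - a = (k - a.+1).+1 by lia.
  by rewrite /= pa h3.
Qed.

Lemma count_take_nth (s : seq bool) (f : pred bool) k : k <= size s ->
  count (fun j => f (nth false s j)) (iota 0 k) = count f (take k s).
Proof.
move=> hk; rewrite -[in RHS](mkseq_nth false s) /mkseq -map_take take_iota.
by rewrite (minn_idPl hk) count_map.
Qed.

Lemma count_take_mono (T : Type) (f : pred T) (s : seq T) n n' : n <= n' ->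
  count f (take n s) <= count f (take n' s).
Proof. by move=> h; rewrite -(subnKC h) takeD count_cat leq_addr. Qed.

Theorem proposition5p4 (m : nat) (alpha : pred int) :
  1 <= m ->
  subset_angle m alpha ->
  card_angle m alpha = 2 * m ->
  weight_zero m alpha ->
  northeast m alpha ->
  (forall i : nat, i < m -> 2 * i.+1 <= nth 0 (pos_part m alpha) i)
  /\ 1 \notin pos_part m alpha /\ 2 * m \in pos_part m alpha.
Proof.
move=> m1 _ hcard hw hne.
set s := steps m alpha.
have hs : size s = 4 * m by rewrite /s /steps /angle !size_map size_iota.
have hnth : forall j, j < 4 * m -> nth false s j = alpha (angle_elem m j).
  move=> j hj; rewrite /s /steps /angle (nth_map 0%R); last by rewrite size_map size_iota.
  by rewrite (nth_map 0) ?size_iota // nth_iota.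
have hrev : rev s = s.
  apply: (@eq_from_nth _ false); first by rewrite size_rev.
  move=> j; rewrite size_rev hs => hj; rewrite nth_rev hs // !hnth; try lia.
  rewrite /angle_elem.
  case: (ltnP j (2 * m)) => hj2.
  - have -> : (4 * m - j.+1 < 2 * m) = false by apply/negbTE; lia.
    have -> : (4 * m - j.+1 - 2 * m).+1 = 2 * m - j by lia.
    by rewrite hw //; lia.
  - have -> : (4 * m - j.+1 < 2 * m) = true by apply/idP; lia.
    have -> : 2 * m - (4 * m - j.+1) = (j - 2 * m).+1 by lia.
    by rewrite hw //; lia.
have hup : count id s = 2 * m.
  by rewrite -hcard /card_angle size_filter /s /steps count_map.
have hrt : count negb s = 2 * m.
  have -> : count negb s = count (predC id) s by apply: eq_count.
  by have := count_predC id s; rewrite hs hup; lia.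
have hsym : forall f n, n <= 4 * m ->
    count f (take n s) + count f (take (4 * m - n) s) = count f s.
  move=> f n hn; rewrite -{3}(cat_take_drop n s) count_cat.
  congr (_ + _); by rewrite -[in RHS]hrev drop_rev count_rev hs.
pose up n := count id (take n s).
pose rt n := count negb (take n s).
have hsum : forall n, n <= 4 * m -> up n + rt n = n.
  move=> n hn; rewrite /up /rt.
  have -> : count negb (take n s) = count (predC id) (take n s) by apply: eq_count.
  rewrite (count_predC id) size_take hs.
  by case: ltnP => //; lia.
have e42 : 4 * m - 2 * m = 2 * m by lia.
have hup2 : up (2 * m) = m.
  by have := hsym id (2 * m) ltac:(lia); rewrite hup e42 /up; lia.
have hrt2 : rt (2 * m) = m.
  by have := hsym negb (2 * m) ltac:(lia); rewrite hrt e42 /rt; lia.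
have hcol : forall c, 1 <= c <= 2 * m -> exists k, k < 4 * m /\
    rt k = c.-1 /\ rt k.+1 = c /\ col_height m alpha c = up k.
  move=> c hc.
  have hlt : c.-1 < count (fun j => ~~ nth false s j) (iota 0 (size s)).
    by rewrite (count_take_nth s negb) // take_size hrt; lia.
  have [/andP [_ hk1] [hk2 hk3]] := @nth_filter_iota _ _ _ _ hlt.
  set k := nth 0 _ _ in hk1 hk2 hk3.
  rewrite add0n hs in hk1; rewrite subn0 (count_take_nth s negb) in hk3; last lia.
  exists k; split => //; split => //; split => //.
  by rewrite /rt (take_nth false) ?hs // -cats1 count_cat hk3 /= hk2; lia.
have rt_mono : forall n n', n <= n' -> rt n <= rt n' by move=> *; exact: count_take_mono.
have up_mono : forall n n', n <= n' -> up n <= up n' by move=> *; exact: count_take_mono.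
have hA : forall c n, 1 <= c <= 2 * m -> rt n < c -> up n <= col_height m alpha c.
  move=> c n hc hn; have [k [hk [h1 [h2 ->]]]] := hcol c hc.
  apply: up_mono; case: (leqP n k) => // hkn.
  have := rt_mono _ _ hkn; lia.
have hB : forall c n, 1 <= c <= 2 * m -> c <= rt n -> col_height m alpha c <= up n.
  move=> c n hc hn; have [k [hk [h1 [h2 ->]]]] := hcol c hc.
  apply: up_mono; case: (leqP n k) => // hkn.
  - have := rt_mono _ _ hkn; lia.
  - exact: ltnW.
have hmain : forall n, 2 * m <= n <= 4 * m -> up n <= rt n.
  move=> n /andP [hn1 hn2]; rewrite leqNgt; apply/negP => hlt.
  have hx := hsum n hn2.
  have hxm := rt_mono _ _ hn1; rewrite hrt2 in hxm.
  have hs1 := hsym id n hn2; have hs2 := hsym negb n hn2.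
  rewrite hup -/(up n) -/(up (4 * m - n)) in hs1.
  rewrite hrt -/(rt n) -/(rt (4 * m - n)) in hs2.
  have hc1 := hA (rt n).+1 n ltac:(apply/andP; lia) (ltnSn _).
  have hc2 := hB (2 * m - rt n) (4 * m - n) ltac:(apply/andP; lia) ltac:(lia).
  have hin : in_partition m alpha (rt n).+1 (2 * m - rt n).
    rewrite /in_partition; apply/and3P; split; try apply/andP; try split; lia.
  have := hne _ _ hin ltac:(lia).
  by rewrite /in_partition => /and3P [_ _]; lia.
pose q := fun i : nat => alpha (Posz i).
pose Q t := count q (iota 1 t).
have hdrop : drop (2 * m) s = map q (iota 1 (2 * m)).
  rewrite /s /steps /angle -!map_drop drop_iota add0n.
  have -> : 4 * m - 2 * m = 2 * m by lia.
  have -> : iota (2 * m) (2 * m) = map (addn (2 * m)) (iota 0 (2 * m)).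
    by rewrite -iotaDl addn0.
  have -> : iota 1 (2 * m) = map (addn 1) (iota 0 (2 * m)).
    by rewrite -iotaDl addn0.
  rewrite -!map_comp.
  apply: eq_map => j /=; rewrite /q /angle_elem.
  have -> : (2 * m + j < 2 * m) = false by apply/negbTE; lia.
  by have -> : 2 * m + j - 2 * m = j by lia.
have hP : forall t, t <= 2 * m -> up (2 * m + t) = m + Q t.
  move=> t ht; rewrite /up takeD count_cat -/(up (2 * m)) hup2 hdrop -map_take.
  by rewrite take_iota (minn_idPl ht) count_map.
have hQ : forall t, t <= 2 * m -> 2 * Q t <= t.
  move=> t ht; have := hmain (2 * m + t) ltac:(apply/andP; lia).
  have := hsum (2 * m + t) ltac:(lia); rewrite hP //; lia.
have hQ2 : Q (2 * m) = m.
  have := hP (2 * m) (leqnn _); rewrite /up.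
  have -> : 2 * m + 2 * m = size s by rewrite hs; lia.
  by rewrite take_size hup; lia.
have hpp : pos_part m alpha = filter q (iota 1 (2 * m)) by [].
split; last split.
- move=> i hi; rewrite hpp.
  have hlt : i < count q (iota 1 (2 * m)) by rewrite -/(Q _) hQ2.
  have [/andP [hv1 hv2] [hv3 hv4]] := @nth_filter_iota _ _ _ _ hlt.
  set v := nth 0 _ _ in hv1 hv2 hv3 hv4 *.
  have hv : Q v = i.+1.
    rewrite /Q; have -> : v = (v - 1) + 1 by lia.
    rewrite iotaD count_cat hv4 /=; have -> : 1 + (v - 1) = v by lia.
    by rewrite hv3; lia.
  have := hQ v ltac:(lia); lia.
- rewrite hpp mem_filter; apply/negP => /andP [h1 _].
  have := hQ 1 ltac:(lia); rewrite /Q /= h1; lia.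
- rewrite hpp mem_filter mem_iota; apply/andP; split; last lia.
  apply/negPn/negP => hn.
  have := hQ (2 * m - 1) ltac:(lia).
  have : Q (2 * m) = Q (2 * m - 1).
    rewrite /Q; have -> : 2 * m = (2 * m - 1) + 1 by lia.
    rewrite iotaD count_cat /=.
    have -> : 1 + (2 * m - 1) = 2 * m by lia.
    by rewrite (negbTE hn) (_ : 2 * m - 1 + 1 - 1 = 2 * m - 1) ?addn0 //; lia.
  lia.
Qed.
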